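(* Let $X$ be a Cantor set with a compatible metric $d$, and let $\sigma$ be an aperiodic homeomorphism of $X$. Then $\sigma$ is chain transitive if and only if $\sigma$ is moving.
   Context: $\sigma$ is aperiodic if every $\sigma$-orbit is infinite. Given $\varepsilon>0$ and $x,y\in X$, an $\varepsilon$-chain from $x$ to $y$ is a finite sequence $x_0,x_1,\dots,x_n$ with $x_0=x$, $x_n=y$ and $d(\sigma(x_i),x_{i+1})<\varepsilon$ for $i=0,\dots,n-1$. $\sigma$ is chain transitive if for all $x,y\in X$ and every $\varepsilon>0$ there is an $\varepsilon$-chain from $x$ to $y$. $\sigma$ is moving if for every clopen set $E$ with $E\ne\emptyset$ and $E\ne X$, both $\sigma(E)\setminus E\ne\emptyset$ and $E\setminus\sigma(E)\ne\emptyset$. *)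

(* Defs.v *)
From HB Require Import structures.
From mathcomp Require Import all_boot all_order all_algebra.
From mathcomp Require Import all_classical all_reals all_analysis.
Set Implicit Arguments. Unset Strict Implicit. Unset Printing Implicit Defensive.
Import Order.TTheory GRing.Theory Num.Theory.
Local Open Scope classical_set_scope.
Local Open Scope ring_scope.

Definition is_metric {R : realType} {X : Type} (d : X -> X -> R) : Prop :=
  [/\ forall x y, d x y = 0 <-> x = y,
      forall x y, d x y = d y x &
      forall x y z, d x z <= d x y + d y z].

Definition compatible_metric {R : realType} {X : topologicalType}
  (d : X -> X -> R) : Prop :=
  is_metric d /\
  forall A : set X, open A <->
    (forall x, A x -> exists2 e : R, 0 < e & [set y | d x y < e] `<=` A).

Definition cantor_set (X : topologicalType) : Prop :=
  [set: X] !=set0 /\ cantor_like X.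

Definition homeomorphism {X : topologicalType} (s : X -> X) : Prop :=
  continuous s /\ exists t : X -> X, [/\ cancel s t, cancel t s & continuous t].

Definition orbit {X : Type} (s : X -> X) (x : X) : set X :=
  [set y | exists n : nat, iter n s x = y \/ iter n s y = x].

Definition aperiodic {X : Type} (s : X -> X) : Prop :=
  forall x, infinite_set (orbit s x).

Definition eps_chain {R : realType} {X : Type} (d : X -> X -> R) (s : X -> X)
  (eps : R) (x y : X) : Prop :=
  exists (n : nat) (f : nat -> X),
    [/\ f 0%N = x, f n = y &
        forall i : nat, (i < n)%N -> d (s (f i)) (f i.+1) < eps].

Definition chain_transitive {R : realType} {X : Type} (d : X -> X -> R)
  (s : X -> X) : Prop :=
  forall (x y : X) (eps : R), 0 < eps -> eps_chain d s eps x y.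

Definition moving {X : topologicalType} (s : X -> X) : Prop :=
  forall E : set X, clopen E -> E <> set0 -> E <> setT ->
    (s @` E) `\` E <> set0 /\ E `\` (s @` E) <> set0.

(* Main.v *)
Require Import Defs.
From HB Require Import structures.
From mathcomp Require Import all_boot all_order all_algebra.
From mathcomp Require Import all_classical all_reals all_analysis.
From mathcomp Require Import lra.
Set Implicit Arguments. Unset Strict Implicit. Unset Printing Implicit Defensive.
Import Order.TTheory GRing.Theory Num.Theory.
Local Open Scope classical_set_scope.
Local Open Scope ring_scope.

Lemma ball_open (R : realType) (X : topologicalType) (d : X -> X -> R) :
  compatible_metric d -> forall x e, open [set y | d x y < e].
Proof.
move=> [[d0 dsym dtri] Hop] x e; apply/Hop => y /= dy.
exists (e - d x y); first by rewrite subr_gt0.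
move=> z /= dz; have := dtri x y z; lra.
Qed.

Lemma ball_nbhs (R : realType) (X : topologicalType) (d : X -> X -> R) :
  compatible_metric d -> forall (x : X) e, 0 < e -> nbhs x [set y | d x y < e].
Proof.
move=> hd x e e0; apply: open_nbhs_nbhs; split; first exact: ball_open.
by case: hd => -[d0 _ _] _ /=; rewrite (proj2 (d0 x x) erefl).
Qed.

Lemma unif_delta (R : realType) (X : topologicalType) (d : X -> X -> R) (E : set X) :
  cantor_set X -> compatible_metric d -> clopen E ->
  exists2 del : R, 0 < del & forall a b, E a -> d a b < del -> E b.
Proof.
move=> [_ [_ cmpT _ _]] hd [oE clE].
have cE : compact E := subclosed_compact clE cmpT (@subsetT _ E).
have := (iffLR (compact_near_coveringP E) cE) R (nbhs (0:R)^'+)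
  (fun del a => forall b, d a b < del -> E b) _.
move=> H; have {H} : \forall del \near (0:R)^'+,
   E `<=` (fun a => forall b, d a b < del -> E b).
  apply: H.
  move=> x Ex; have [hm Hop] := hd.
  have [r r0 rE] := (iffLR (Hop E) oE) x Ex.
  exists ([set y | d x y < r / 2], [set del | del < r / 2]).
    split; first by apply: ball_nbhs => //; lra.
    by apply: nbhs_right_lt; lra.
  case=> x' del [/= h1 h2] b hb; apply: rE => /=.
  case: hm => _ _ dtri; have := dtri x x' b; lra.
move=> Anb.
have [del [del0 Hdel]] := filter_ex (filterI (nbhs_right_gt (0:R)) Anb).
by exists del => // a b Ea; exact: (Hdel a Ea).
Qed.

Lemma no_invariant (R : realType) (X : topologicalType) (d : X -> X -> R)
  (s : X -> X) (E : set X) :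
  cantor_set X -> compatible_metric d -> chain_transitive d s ->
  clopen E -> E !=set0 -> ~` E !=set0 -> ~ (forall z, E z -> E (s z)).
Proof.
move=> cX hd ct cE [x Ex] [y nEy] inv.
have [del del0 Hdel] := unif_delta cX hd cE.
have [n [f [f0 fn fstep]]] := ct x y del del0.
suff : forall i, (i <= n)%N -> E (f i) by move/(_ n (leqnn n)); rewrite fn.
elim=> [|i IH] Hi; first by rewrite f0.
apply: (Hdel (s (f i))); first by apply: inv; apply: IH; exact: ltnW.
exact: fstep.
Qed.

Lemma chain_snoc (R : realType) (X : Type) (d : X -> X -> R) (s : X -> X)
  eps x z y : eps_chain d s eps x z -> d (s z) y < eps -> eps_chain d s eps x y.
Proof.
move=> [n [f [f0 fn fs]]] h.
exists n.+1, (fun i => if (i <= n)%N then f i else y); split => /=.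
- by [].
- by rewrite ltnn.
- move=> i; rewrite ltnS => lei; rewrite lei.
  case: leqP => hi; last by apply: fs.
  have -> : i = n by apply/eqP; rewrite eqn_leq lei hi.
  by rewrite fn.
Qed.

Lemma clopen_between (X : topologicalType) (K O : set X) :
  cantor_set X -> compact K -> open O -> K `<=` O ->
  exists E, [/\ clopen E, K `<=` E & E `<=` O].
Proof.
move=> [_ [_ cmpT hsdf zd]] cK oO KO.
pose F := filter_from [set D : set X | clopen D /\ D `<=` O]
  (fun D => [set E : set X | [/\ clopen E, E `<=` O & D `<=` E]]).
have FF : Filter F.
  apply: filter_from_filter.
    by exists set0; split; [exact: clopen0 | exact: sub0set].
  move=> D1 D2 [c1 s1] [c2 s2]; exists (D1 `|` D2).
    by split; [exact: clopenU | move=> ? [/s1|/s2]].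
  move=> E [cE EO DE]; split; split => //.
    by apply: subset_trans DE; exact: subsetUl.
  by apply: subset_trans DE; exact: subsetUr.
have := (iffLR (compact_near_coveringP K) cK) (set X) F (fun E x => E x) FF.
move=> H; have {H} : \forall E \near F, K `<=` E.
  apply: H => x Kx.
  have := @zero_dimensional_cvg _ x hsdf zd cmpT.
  move=> /(_ O (open_nbhs_nbhs (conj oO (KO x Kx)))) [C [Cx cC] CO].
  exists (C, [set E : set X | [/\ clopen E, E `<=` O & C `<=` E]]).
    split; first by apply: open_nbhs_nbhs; split => //; case: cC.
    by exists C.
  by case=> x' E [/= Cx' [_ _ CE]]; exact: CE.
move=> [D [cD DO] sub].
exists D; split => //; apply: sub; split => //.
Qed.

Theorem theorem10p3 (R : realType) (X : topologicalType) (d : X -> X -> R)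
  (s : X -> X) :
  cantor_set X -> compatible_metric d -> homeomorphism s -> aperiodic s ->
  (chain_transitive d s <-> moving s).
Proof.
move=> cX hd [hs [t [st ts ht]]] _; split.
- move=> ct E cE E0 ET.
  have En : E !=set0 by apply/set0P; apply/eqP.
  have nEn : ~` E !=set0.
    by apply/set0P/eqP => h; apply: ET; rewrite -(setCK E) h setC0.
  split.
  + move=> h; apply: (no_invariant cX hd ct cE En nEn) => z Ez.
    apply: contrapT => nE.
    have : ((s @` E) `\` E) (s z) by split => //; exists z.
    by rewrite h.
  + move=> h; apply: (no_invariant cX hd ct (clopenC E cE) nEn).
      by rewrite setCK.
    move=> z nEz Esz.
    have : (E `\` (s @` E)) (s z).
      split => //; case=> w Ew swz; apply: nEz.
      by rewrite -(st z) -swz st.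
    by rewrite h.
- move=> mv x y eps eps0.
  have [[d0 dsym dtri] Hop] := hd.
  pose C := [set w | exists2 z, eps_chain d s eps x z & d (s z) w < eps].
  have CR : forall w, C w -> eps_chain d s eps x w.
    by move=> w [z]; exact: chain_snoc.
  have oC : open C.
    apply/Hop => w [z rz dzw]; exists (eps - d (s z) w); first by rewrite subr_gt0.
    move=> v /= dv; exists z => //; have := dtri (s z) w v; lra.
  have Csx : C (s x).
    exists x; first by exists 0%N, (fun _ => x); split.
    by rewrite (proj2 (d0 _ _) erefl).
  have [_ [_ cmpT _ _]] := cX.
  have cK : compact (closure C).
    by apply: (subclosed_compact _ cmpT) => //; exact: closed_closure.
  have oO : open (s @^-1` C) := open_comp (fun w _ => hs w) oC.
  have KO : closure C `<=` s @^-1` C.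
    move=> w; rewrite closureEnbhs => /= clw.
    have nb : nbhs w (s @^-1` [set v | d (s w) v < eps]) :=
      hs w _ (ball_nbhs hd (s w) eps0).
    have [v [Cv /= dv]] := clw C _ (fun _ h => h) nb.
    by exists v; [exact: CR | rewrite dsym].
  have [E [cE KE EO]] := clopen_between cX cK oO KO.
  have sE : forall e, E e -> E (s e).
    by move=> e /EO /= Cse; apply: KE; exact: subset_closure.
  have ET : E = setT.
    apply: contrapT => ET.
    have E0 : E <> set0.
      move=> E0; have : E (s x) by apply: KE; apply: subset_closure.
      by rewrite E0.
    apply: (mv E cE E0 ET).1.
    apply/seteqP; split; last exact: sub0set.
    by move=> _ [ [e Ee <-] nE]; exact: (nE (sE e Ee)).
  have Ety : E (t y) by rewrite ET.
  have := EO _ Ety.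
  by rewrite /= ts; exact: CR.
Qed.
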